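(* Let $c=(c_1,\dots,c_p)$ with $c_1\ge\cdots\ge c_p>0$ and $C=\operatorname{diag}(c_1,\dots,c_p)$. If $R\in M_p$ satisfies $\|R\|_c=\operatorname{tr}(CR)$, where $\|R\|_c=\sum_{j=1}^p c_js_j(R)$, then $R$ is positive semidefinite.
   Context: $M_p$ is the set of $p\times p$ complex matrices and $s_1(R)\ge\cdots\ge s_p(R)$ are the singular values of $R$. *)

(* Defs.v *)
From mathcomp Require Import all_boot all_order all_algebra.
From mathcomp Require Import reals.
From mathcomp.real_closed Require Import complex.
Set Implicit Arguments. Unset Strict Implicit. Unset Printing Implicit Defensive.
Import Order.TTheory GRing.Theory Num.Theory.
Local Open Scope ring_scope.

Definition adjmx (R : realType) m n (A : 'M[R[i]]_(m, n)) : 'M[R[i]]_(n, m) :=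
  map_mx Num.conj (A^T).

Definition singular_values (R : realType) (p : nat) (A : 'M[R[i]]_p)
    (s : 'I_p -> R) : Prop :=
  [/\ forall j, 0 <= s j,
      forall j k : 'I_p, (j <= k)%N -> s k <= s j &
      char_poly (adjmx A *m A) = \prod_(j < p) ('X - (real_complex R (s j ^+ 2))%:P)].

Definition cnorm (R : realType) (p : nat) (c s : 'I_p -> R) : R :=
  \sum_(j < p) c j * s j.

Definition psd (R : realType) (p : nat) (A : 'M[R[i]]_p) : Prop :=
  adjmx A = A /\ forall x : 'cV[R[i]]_p, 0 <= (adjmx x *m A *m x) ord0 ord0.

(* Main.v *)
Require Import Defs.
From mathcomp Require Import all_boot all_order all_algebra perm.
From mathcomp Require Import reals.
From mathcomp.real_closed Require Import complex.
From mathcomp Require Import ring lra.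
Import Order.TTheory GRing.Theory Num.Theory.
Local Open Scope ring_scope.
Section RA.
Variable R : realType.

Lemma abel_nonneg (n : nat) (c z : nat -> R) :
  (forall i j, (i <= j < n)%N -> c j <= c i) ->
  (forall i, (i < n)%N -> 0 <= c i) ->
  (forall k, (k < n)%N -> 0 <= \sum_(i < k.+1) z i) ->
  0 <= \sum_(i < n) c i * z i.
Proof.
elim: n c => [|n IH] c hdec hpos hz; first by rewrite big_ord0.
have -> : \sum_(i < n.+1) c i * z i =
    \sum_(i < n) (c i - c n) * z i + c n * \sum_(i < n.+1) z i.
  rewrite big_ord_recr /= mulr_sumr big_ord_recr /= addrA; congr (_ + _).
  rewrite -big_split /=; apply: eq_bigr => i _; ring.
apply: addr_ge0; last by apply: mulr_ge0; [apply: hpos|apply: hz].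
apply: (IH (fun i => c i - c n)).
- move=> i j /andP[hij hjn]; rewrite lerD2r; apply: hdec.
  by rewrite hij /= ltnS ltnW.
- move=> i hi; rewrite subr_ge0; apply: hdec; by rewrite ltnW //= leqnn.
- by move=> k hk; apply: hz; rewrite ltnS ltnW.
Qed.

Lemma claim1 (p : nat) (s e : 'I_p -> R) (k : 'I_p) :
  (forall j l : 'I_p, (j <= l)%N -> s l <= s j) -> (forall j, 0 <= s j) ->
  (forall j, 0 <= e j) -> (forall j, e j <= 1) ->
  \sum_j e j <= \sum_(j : 'I_p) ((j <= k)%N)%:R ->
  \sum_j s j * e j <= \sum_(j : 'I_p) ((j <= k)%N)%:R * s j.
Proof.
move=> hdec hs0 he0 he1 hsum.
rewrite -subr_le0 -sumrB.
apply: (@le_trans _ _ (\sum_j s k * (e j - ((j <= k)%N)%:R))).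
  apply: ler_sum => j _.
  case: (leqP j k) => hjk /=.
  - have := hdec _ _ hjk; have := he1 j; nra.
  - have := hdec _ _ (ltnW hjk); have := he0 j; nra.
rewrite -mulr_sumr sumrB.
by apply: mulr_ge0_le0 => //; rewrite subr_le0.
Qed.

Lemma RA (p : nat) (c s : 'I_p -> R) (d : 'I_p -> 'I_p -> R) :
  (forall j l : 'I_p, (j <= l)%N -> c l <= c j) -> (forall j, 0 <= c j) ->
  (forall j l : 'I_p, (j <= l)%N -> s l <= s j) -> (forall j, 0 <= s j) ->
  (forall i j, 0 <= d i j) ->
  (forall i, \sum_j d i j <= 1) -> (forall j, \sum_i d i j <= 1) ->
  \sum_i \sum_j c i * s j * d i j <= \sum_i c i * s i.
Proof.
move=> hcd hc0 hsd hs0 hd0 hrow hcol.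
pose y i := \sum_j s j * d i j.
have -> : \sum_i \sum_j c i * s j * d i j = \sum_i c i * y i.
  by apply: eq_bigr => i _; rewrite /y mulr_sumr; apply: eq_bigr => j _; rewrite mulrA.
rewrite -subr_ge0 -sumrB.
pose cn n := if @insub _ (fun m => (m < p)%N) 'I_p n is Some i then c i else 0.
pose zn n := if @insub _ (fun m => (m < p)%N) 'I_p n is Some i then s i - y i else 0.
have -> : \sum_i (c i * s i - c i * y i) = \sum_(i < p) cn i * zn i.
  by apply: eq_bigr => i _; rewrite /cn /zn valK mulrBr.
apply: abel_nonneg.
- move=> i j /andP[hij hjp]; have hip : (i < p)%N by apply: leq_ltn_trans hjp.
  change (cn (Ordinal hjp) <= cn (Ordinal hip)).
  by rewrite /cn !valK; apply: hcd.
- by move=> i hip; change (0 <= cn (Ordinal hip)); rewrite /cn valK.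
move=> k hk.
rewrite (big_ord_widen p zn hk) big_mkcond /=.
have -> : \sum_(i < p) (if (i < k.+1)%N then zn i else 0) =
   \sum_(i < p) ((i <= k)%N)%:R * s i - \sum_(i < p) ((i <= k)%N)%:R * y i.
  rewrite -sumrB; apply: eq_bigr => i _; rewrite /zn valK ltnS.
  by case: (i <= k)%N; rewrite ?mul1r ?mul0r ?subr0.
rewrite subr_ge0.
pose e j := \sum_(i < p) ((i <= k)%N)%:R * d i j.
have -> : \sum_(i < p) ((i <= k)%N)%:R * y i = \sum_j s j * e j.
  rewrite /y /e; under eq_bigr do rewrite mulr_sumr.
  rewrite exchange_big /=; apply: eq_bigr => j _; rewrite mulr_sumr.
  by apply: eq_bigr => i _; rewrite mulrCA.
have := @claim1 p s e (Ordinal hk) hsd hs0; apply.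
- by move=> j; apply: sumr_ge0 => i _; apply: mulr_ge0.
- move=> j; apply: le_trans (hcol j); apply: ler_sum => i _.
  by case: (i <= k)%N; rewrite ?mul1r ?mul0r.
- rewrite /e exchange_big /=; apply: ler_sum => i _.
  by rewrite -mulr_sumr; case: (i <= k)%N; rewrite ?mul1r ?mul0r.
Qed.
End RA.
Section MX.
Local Open Scope sesquilinear_scope.
Variable R : realType.
Local Notation C := (R[i]).

Lemma adjmxE m n (A : 'M[C]_(m,n)) : adjmx A = A ^t*. Proof. reflexivity. Qed.

Lemma unitary_mulV n (W : 'M[C]_n) : W \is unitarymx -> W^t* *m W = 1%:M.
Proof. by move=> Wu; rewrite -invmx_unitary // mulVmx // unitarymx_unit. Qed.

Lemma unitary_mulC n (W : 'M[C]_n) : W \is unitarymx -> W *m W^t* = 1%:M.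
Proof. by move/unitarymxP. Qed.

Lemma adj_mul m n k (A : 'M[C]_(m,n)) (B : 'M[C]_(n,k)) : (A *m B)^t* = B^t* *m A^t*.
Proof. by rewrite trmx_mul map_mxM. Qed.

Lemma char_poly_sim n (P B : 'M[C]_n) : P \in unitmx ->
  char_poly (invmx P *m B *m P) = char_poly B.
Proof.
move=> Pu; rewrite /char_poly /char_poly_mx.
have -> : 'X%:M - map_mx polyC (invmx P *m B *m P) =
  map_mx polyC (invmx P) *m ('X%:M - map_mx polyC B) *m map_mx polyC P.
  rewrite mulmxBr mulmxBl -!map_mxM; congr (_ - _).
  by rewrite -mulmxA -scalar_mxC mulmxA -map_mxM mulVmx // map_mx1 mul1mx.
rewrite !det_mulmx mulrAC -det_mulmx -map_mxM mulVmx //.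
by rewrite map_mx1 det1 mul1r.
Qed.

End MX.
Arguments unitary_mulV {R n W}.
Arguments unitary_mulC {R n W}.
Section CX.
Variable R : realType.
Local Notation C := (R[i]).
Local Notation Re := (@complex.Re R).
Local Notation Im := (@complex.Im R).
Definition sq (z : C) : R := Re z ^+ 2 + Im z ^+ 2.
Lemma ReM (x y : C) : Re (x * y) = Re x * Re y - Im x * Im y.
Proof. by case: x => a b; case: y => c d. Qed.
Lemma ImM (x y : C) : Im (x * y) = Re x * Im y + Im x * Re y.
Proof. by case: x => a b; case: y => c d. Qed.
Lemma ReC (z : C) : Re (Num.conj z) = Re z.
Proof. by case: z. Qed.
Lemma ImC (z : C) : Im (Num.conj z) = - Im z.
Proof. by case: z. Qed.
Lemma ReD (x y : C) : Re (x + y) = Re x + Re y.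
Proof. by case: x => a b; case: y => c d. Qed.
Lemma ImD (x y : C) : Im (x + y) = Im x + Im y.
Proof. by case: x => a b; case: y => c d. Qed.
Lemma ReB (x y : C) : Re (x - y) = Re x - Re y.
Proof. by case: x => a b; case: y => c d. Qed.
Lemma ImB (x y : C) : Im (x - y) = Im x - Im y.
Proof. by case: x => a b; case: y => c d. Qed.
Lemma Re_sum I (r : seq I) (P : pred I) (F : I -> C) :
  Re (\sum_(i <- r | P i) F i) = \sum_(i <- r | P i) Re (F i).
Proof. exact: (big_morph _ ReD). Qed.
Lemma Im_sum I (r : seq I) (P : pred I) (F : I -> C) :
  Im (\sum_(i <- r | P i) F i) = \sum_(i <- r | P i) Im (F i).
Proof. exact: (big_morph _ ImD). Qed.
Lemma Re_rc (x : R) : Re (x%:C)%C = x. Proof. by []. Qed.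
Lemma Im_rc (x : R) : Im (x%:C)%C = 0. Proof. by []. Qed.
Lemma Re_rcM (x : R) (z : C) : Re ((x%:C)%C * z) = x * Re z.
Proof. by rewrite ReM /=; ring. Qed.
Lemma Re_mulC (z : C) : Re (z * Num.conj z) = sq z.
Proof. by rewrite ReM ReC ImC /sq; ring. Qed.
Lemma Re_Cmul (z : C) : Re (Num.conj z * z) = sq z.
Proof. by rewrite ReM ReC ImC /sq; ring. Qed.
Lemma Im_mulC (z : C) : Im (z * Num.conj z) = 0.
Proof. by rewrite ImM ReC ImC; ring. Qed.
Lemma Im_Cmul (z : C) : Im (Num.conj z * z) = 0.
Proof. by rewrite ImM ReC ImC; ring. Qed.
Lemma sq_ge0 (z : C) : 0 <= sq z.
Proof. by rewrite /sq addr_ge0 // sqr_ge0. Qed.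
Lemma sq_eq0 (z : C) : sq z = 0 -> z = 0.
Proof.
case: z => a b; rewrite /sq /= => h.
have ha : a = 0 by apply/eqP; rewrite -sqrf_eq0; apply/eqP; nra.
have hb : b = 0 by apply/eqP; rewrite -sqrf_eq0; apply/eqP; nra.
by rewrite ha hb.
Qed.
Lemma sq_mulr (z : C) (x : R) : sq (z * (x%:C)%C) = sq z * x ^+ 2.
Proof. by rewrite /sq ReM ImM /=; ring. Qed.
Lemma sq_conj (z : C) : sq (Num.conj z) = sq z.
Proof. by rewrite /sq ReC ImC; ring. Qed.

Lemma amgm (t c : R) (w b : C) : 0 <= t -> 0 <= c -> (t = 0 -> b = 0) ->
  c * Re (w * b) <= c * t * ((sq w + sq b / t ^+ 2) / 2).
Proof.
move=> ht hc hb; have [t0|tn0] := eqVneq t 0.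
  by rewrite t0 (hb t0) !mulr0 mul0r.
have tp : 0 < t by rewrite lt_def tn0.
rewrite -mulrA; apply: ler_wpM2l => //.
have -> : t * ((sq w + sq b / t ^+ 2) / 2) = (t ^+ 2 * sq w + sq b) / (2 * t).
  by field; rewrite tn0.
rewrite ler_pdivlMr ?mulr_gt0 //.
rewrite ReM /sq.
have := sqr_ge0 (t * Re w - Re b); have := sqr_ge0 (t * Im w + Im b).
nra.
Qed.
End CX.
Arguments sq {R}.
Section L1.
Local Open Scope sesquilinear_scope.
Variable R : realType.
Local Notation C := (R[i]).
Local Notation Re := (@complex.Re R).
Local Notation Im := (@complex.Im R).

Lemma cplx_ext (z w : C) : Re z = Re w -> Im z = Im w -> z = w.
Proof. by case: z => a b; case: w => c d /= -> ->. Qed.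

Lemma conjK (z : C) : Num.conj (Num.conj z) = z.
Proof. by apply: cplx_ext; rewrite ?ReC ?ImC ?opprK. Qed.

Lemma conjM (x y : C) : Num.conj (x * y) = Num.conj x * Num.conj y.
Proof. by apply: cplx_ext; rewrite ?ReC ?ImC ?ReM ?ImM ?ReC ?ImC; ring. Qed.

Lemma conjD (x y : C) : Num.conj (x + y) = Num.conj x + Num.conj y.
Proof. by apply: cplx_ext; rewrite ?ReC ?ImC ?ReD ?ImD ?ReC ?ImC // opprD. Qed.

Lemma conj0 : Num.conj (0 : C) = 0.
Proof. by apply: cplx_ext; rewrite ?ReC ?ImC //= oppr0. Qed.

Lemma conj_sum I (r : seq I) (P : pred I) (F : I -> C) :
  Num.conj (\sum_(i <- r | P i) F i) = \sum_(i <- r | P i) Num.conj (F i).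
Proof. exact: (big_morph _ conjD conj0). Qed.

Lemma adj_entry m n (E : 'M[C]_(m,n)) i j : (E^t*) j i = Num.conj (E i j).
Proof. by rewrite !mxE. Qed.

Lemma proj_bound n (E : 'M[C]_n) : E *m (E^t* *m E) = E ->
  forall i, \sum_j sq (E i j) <= 1.
Proof.
move=> hE i; set P := E *m E^t*.
have PP : P *m P = P by rewrite /P !mulmxA -[E *m E^t* *m E]mulmxA hE.
have Pik : forall k l, P k l = \sum_j E k j * Num.conj (E l j).
  by move=> k l; rewrite /P mxE; apply: eq_bigr => j _; rewrite adj_entry.
have Pc : forall k, P k i = Num.conj (P i k).
  move=> k; rewrite !Pik conj_sum; apply: eq_bigr => j _.
  by rewrite conjM conjK mulrC.
have hx : Re (P i i) = \sum_j sq (E i j).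
  by rewrite Pik Re_sum; apply: eq_bigr => j _; rewrite Re_mulC.
have hPP : Re ((P *m P) i i) = \sum_k sq (P i k).
  by rewrite mxE Re_sum; apply: eq_bigr => k _; rewrite Pc Re_mulC.
have hge : sq (P i i) <= \sum_k sq (P i k).
  by rewrite (bigD1 i) //= lerDl sumr_ge0 // => k _; apply: sq_ge0.
have hre : Re (P i i) ^+ 2 <= sq (P i i).
  by rewrite /sq lerDl sqr_ge0.
rewrite -hx; move: hge; rewrite -hPP PP => hge.
have x0 : 0 <= Re (P i i) by rewrite hx sumr_ge0 // => j _; apply: sq_ge0.
nra.
Qed.
End L1.
Section L1b.
Local Open Scope sesquilinear_scope.
Variable R : realType.
Local Notation C := (R[i]).
Local Notation Re := (@complex.Re R).
Local Notation Im := (@complex.Im R).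

Lemma conj_rc (x : R) : Num.conj ((x%:C)%C : C) = (x%:C)%C.
Proof. by apply: cplx_ext; rewrite ?ReC ?ImC //= oppr0. Qed.

Lemma rcM (x y : R) : ((x%:C)%C : C) * (y%:C)%C = ((x * y)%:C)%C.
Proof. by apply: cplx_ext; rewrite ?ReM ?ImM /=; ring. Qed.

Lemma L1 (p : nat) (c : 'I_p -> R)
  (hcd : forall j k : 'I_p, (j <= k)%N -> c k <= c j) (hc0 : forall j, 0 <= c j)
  (A : 'M[C]_p) (s : 'I_p -> R) (hs : singular_values A s) :
  Re (\tr (diag_mx (\row_j ((c j)%:C)%C) *m A)) <= cnorm c s.
Proof.
case: hs => hs0 hsd hchar.
set H := A^t* *m A.
have Hadj : H^t* = H by rewrite /H adj_mul trmxCK.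
have Hn : H \is normalmx by apply/normalmxP; rewrite Hadj.
set W := spectralmx H; set l := spectral_diag H.
have HE : H = invmx W *m diag_mx l *m W by apply/orthomx_spectralP.
have Wu : W \is unitarymx := spectral_unitarymx H.
have iW : invmx W = W^t* by rewrite invmx_unitary.
have WV := unitary_mulV Wu; have WC := unitary_mulC Wu.
have hprod : \prod_(j < p) ('X - (l 0 j)%:P) =
             \prod_(j < p) ('X - ((s j ^+ 2)%:C)%C%:P).
  rewrite -hchar -/H HE char_poly_sim ?unitarymx_unit //.
  rewrite char_poly_trig ?diag_mx_is_trig //.
  by apply: eq_bigr => j _; rewrite mxE eqxx mulr1n.
have [σ hσ] : exists σ : 'S_p, forall j, l 0 j = ((s (σ j) ^+ 2)%:C)%C.
  pose t1 := [tuple l 0 j | j < p].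
  pose t2 := [tuple ((s j ^+ 2)%:C)%C : C | j < p].
  have : perm_eq t1 t2.
    apply: prod_XsubC_eq; rewrite !big_tuple.
    by under eq_bigr do rewrite tnth_mktuple; under [RHS]eq_bigr do rewrite tnth_mktuple.
  move/tuple_permP => [σ hσ]; exists σ => j.
  have := congr1 (fun x => nth 0 x j) hσ.
  by rewrite -(tnth_nth 0 t1) -(tnth_nth 0 [tuple tnth t2 (σ i) | i < p]) !tnth_mktuple.
pose τ j := s (σ j).
have τ0 : forall j, 0 <= τ j by move=> j; apply: hs0.
set B := A *m W^t*.
have BB : B^t* *m B = diag_mx l.
  rewrite /B adj_mul trmxCK -!mulmxA (mulmxA (A^t*)) -/H HE iW.
  by rewrite !mulmxA WC mul1mx -mulmxA WC mulmx1.
have AE : A = B *m W by rewrite /B -mulmxA WV mulmx1.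
have F1 : forall j, \sum_i sq (W j i) = 1.
  move=> j; have := congr1 (fun M : 'M[C]_p => Re (M j j)) WC.
  rewrite /= !mxE eqxx mulr1n Re_sum /= => <-.
  by apply: eq_bigr => i _; rewrite !mxE Re_mulC.
have F2 : forall i, \sum_j sq (W j i) = 1.
  move=> i; have := congr1 (fun M : 'M[C]_p => Re (M i i)) WV.
  rewrite /= !mxE eqxx mulr1n Re_sum /= => <-.
  by apply: eq_bigr => j _; rewrite !mxE Re_Cmul.
have F3 : forall j, \sum_i sq (B i j) = τ j ^+ 2.
  move=> j; have := congr1 (fun M : 'M[C]_p => Re (M j j)) BB.
  rewrite /= !mxE eqxx mulr1n Re_sum hσ /= => <-.
  by apply: eq_bigr => i _; rewrite !mxE Re_Cmul.
have F5 : forall i j, τ j = 0 -> B i j = 0.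
  move=> i j hj; apply: sq_eq0; apply/eqP; rewrite eq_le sq_ge0 andbT.
  have <- : \sum_k sq (B k j) = 0 by rewrite F3 hj expr0n.
  by rewrite (bigD1 i) //= lerDl sumr_ge0 // => k _; apply: sq_ge0.
have F4 : forall i, \sum_j sq (B i j) / τ j ^+ 2 <= 1.
  pose D := diag_mx (\row_j (((τ j)^-1)%:C)%C : 'rV[C]_p).
  pose E := B *m D.
  have Dadj : D^t* = D.
    rewrite /D tr_diag_mx map_diag_mx; congr diag_mx; apply/rowP => j.
    by rewrite !mxE; exact: conj_rc.
  have Eab : forall a b, E a b = B a b * (((τ b)^-1)%:C)%C.
    by move=> a b; rewrite /E /D mul_mx_diag !mxE.
  have EE : E^t* *m E = diag_mx (\row_j ((((τ j)^-1)%:C)%C *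
                  (l 0 j * (((τ j)^-1)%:C)%C))).
    rewrite /E adj_mul Dadj -mulmxA (mulmxA (B^t*)) BB /D !mulmx_diag.
    by congr diag_mx; apply/rowP => j; rewrite !mxE.
  have hE : E *m (E^t* *m E) = E.
    rewrite EE mul_mx_diag; apply/matrixP => a b.
    rewrite [LHS]mxE [X in _ * X]mxE hσ -/(τ b).
    have [t0|tn0] := eqVneq (τ b) 0.
      by rewrite !Eab (F5 a b t0) !mul0r.
    rewrite !rcM /τ.
    have -> : (s (σ b))^-1 * (s (σ b) ^+ 2 * (s (σ b))^-1) = 1 by field.
    by rewrite mulr1.
  move=> i; have := @proj_bound _ _ E hE i.
  by under eq_bigr do rewrite Eab sq_mulr exprVn.
pose d i j := (sq (W j i) + sq (B i j) / τ j ^+ 2) / 2.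
have tE : \tr (diag_mx (\row_j ((c j)%:C)%C) *m A) =
          \sum_j \sum_i W j i * (((c i)%:C)%C * B i j).
  rewrite AE mulmxA mxtrace_mulC /mxtrace; apply: eq_bigr => j _.
  by rewrite mxE; apply: eq_bigr => i _; rewrite mul_diag_mx !mxE.
rewrite tE Re_sum.
apply: (@le_trans _ _ (\sum_j \sum_i c i * τ j * d i j)).
  apply: ler_sum => j _; rewrite Re_sum; apply: ler_sum => i _.
  by rewrite mulrCA Re_rcM; apply: amgm => //; apply: F5.
rewrite exchange_big /=.
have -> : \sum_i \sum_j c i * τ j * d i j =
          \sum_i \sum_j c i * s j * d i (σ^-1 j)%g.
  apply: eq_bigr => i _; rewrite (reindex_inj (@perm_inj _ (σ^-1)%g)) /=.
  by apply: eq_bigr => j _; rewrite /τ permKV.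
apply: RA => //.
- move=> i j; rewrite /d; apply: divr_ge0; last by [].
  apply: addr_ge0; first exact: sq_ge0.
  by apply: divr_ge0; [apply: sq_ge0 | apply: exprn_ge0].
- move=> i; rewrite (reindex_inj (@perm_inj _ σ)) /= .
  under eq_bigr do rewrite permK.
  rewrite /d -mulr_suml big_split /= F2 ler_pdivrMr // mul1r.
  by apply: lerD; [ | apply: F4].
- move=> j; rewrite /d -mulr_suml big_split /= F1 ler_pdivrMr // mul1r.
  rewrite -mulr_suml F3.
  have [t0|tn0] := eqVneq (τ ((σ^-1)%g j)) 0.
    by rewrite t0 expr0n /= mul0r; lra.
  by rewrite divff ?expf_neq0.
Qed.
End L1b.
Section MAX.
Local Open Scope sesquilinear_scope.
Variable R : realType.
Local Notation C := (R[i]).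
Local Notation Re := (@complex.Re R).
Local Notation Im := (@complex.Im R).

Lemma Re_Mrc (x : C) (y : R) : Re (x * (y%:C)%C) = Re x * y.
Proof. by rewrite ReM /=; ring. Qed.

Lemma G p (M : 'M[C]_p)
  (hmax : forall U : 'M[C]_p, U \is unitarymx -> Re (\tr (U *m M)) <= Re (\tr M))
  (V : 'M[C]_p) (Vu : V \is unitarymx) (j : 'I_p) :
  Im ((V *m M *m V^t*) j j) = 0 /\ 0 <= Re ((V *m M *m V^t*) j j).
Proof.
set N := V *m M *m V^t*; set z := N j j.
have trN : forall (e : 'rV[C]_p),
    \tr ((V^t* *m diag_mx e *m V) *m M) = \sum_k e 0 k * N k k.
  move=> e; rewrite -!mulmxA mxtrace_mulC -mulmxA.
  by rewrite /mxtrace; apply: eq_bigr => k _; rewrite mul_diag_mx mxE.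
have trM : \tr M = \sum_k N k k.
  have := trN (const_mx 1); rewrite diag_const_mx mulmx1 (unitary_mulV Vu) mul1mx => ->.
  by apply: eq_bigr => k _; rewrite mxE mul1r.
have [z0|zn0] := eqVneq (sq z) 0.
  by rewrite (@sq_eq0 _ _ z0).
have sqp : 0 < sq z by rewrite lt_def zn0 sq_ge0.
pose r := Num.sqrt (sq z).
have rp : 0 < r by rewrite sqrtr_gt0.
have r2 : r ^+ 2 = sq z by rewrite sqr_sqrtr // sq_ge0.
pose w := Num.conj z * ((r^-1)%:C)%C.
have hw : Re (w * z) = r.
  rewrite /w mulrAC Re_Mrc Re_Cmul -r2; field.
  by rewrite gt_eqF.
have wu : w * Num.conj w = 1.
  apply: cplx_ext; rewrite ?Re_mulC ?Im_mulC //.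
  rewrite /w sq_mulr sq_conj -r2 /=; field; by rewrite gt_eqF.
pose e := \row_k (if k == j then w else 1 : C).
have Uu : V^t* *m diag_mx e *m V \is unitarymx.
  apply: mul_unitarymx => //; apply: mul_unitarymx; first by rewrite trmxC_unitary.
  apply/unitarymxP; rewrite tr_diag_mx map_diag_mx mulmx_diag -diag_const_mx.
  congr diag_mx; apply/rowP => k; rewrite !mxE; case: eqP => _.
    exact: wu.
  by rewrite mul1r rmorph1.
have := hmax _ Uu; rewrite trN trM !Re_sum (bigD1 j) //= [X in _ <= X](bigD1 j) //=.
have -> : \sum_(k | k != j) Re (e 0 k * N k k) = \sum_(k | k != j) Re (N k k).
  by apply: eq_bigr => k hk; rewrite mxE (negbTE hk) mul1r.
rewrite mxE eqxx -/z hw lerD2r => hr.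
have hre : 0 <= Re z by apply: le_trans hr; apply: ltW.
split=> //.
move: r2; rewrite /sq => r2.
have h : Im z ^+ 2 <= 0 by nra.
by apply/eqP; rewrite -sqrf_eq0 eq_le h sqr_ge0.
Qed.
End MAX.
Section MAX2.
Local Open Scope sesquilinear_scope.
Variable R : realType.
Local Notation C := (R[i]).
Local Notation Re := (@complex.Re R).
Local Notation Im := (@complex.Im R).

Lemma diagE p (V M : 'M[C]_p) (d : 'rV[C]_p) : V \is unitarymx ->
  M = invmx V *m diag_mx d *m V -> V *m M *m V^t* = diag_mx d.
Proof.
move=> Vu ->; rewrite invmx_unitary // !mulmxA (unitary_mulC Vu) mul1mx.
by rewrite -mulmxA (unitary_mulC Vu) mulmx1.
Qed.

Lemma cplx_ge0 (z : C) : Im z = 0 -> 0 <= Re z -> 0 <= z.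
Proof. by move=> h1 h2; rewrite lecE /= h1 eqxx h2. Qed.

Lemma MAX p (M : 'M[C]_p)
  (hmax : forall U : 'M[C]_p, U \is unitarymx -> Re (\tr (U *m M)) <= Re (\tr M)) :
  psd M.
Proof.
have Mh : M^t* = M.
  pose K := M - M^t*.
  have Kadj : K^t* = - K by rewrite /K linearB map_mxB trmxCK opprB.
  have Kn : K \is normalmx by apply/normalmxP; rewrite Kadj mulmxN mulNmx.
  pose V := spectralmx K; pose k := spectral_diag K.
  have Vu : V \is unitarymx := spectral_unitarymx K.
  have KE : K = invmx V *m diag_mx k *m V by apply/orthomx_spectralP.
  have Dk : V *m K *m V^t* = diag_mx k by apply: diagE.
  have k0 : k = 0.
    apply/rowP => j; have := congr1 (fun X : 'M[C]_p => X j j) Dk.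
    rewrite /= [RHS]mxE eqxx mulr1n => <-.
    rewrite /K mulmxBr mulmxBl.
    have -> : V *m M^t* *m V^t* = (V *m M *m V^t*)^t*.
      by rewrite !adj_mul trmxCK mulmxA.
    have [hI _] := @G _ _ _ hmax _ Vu j.
    have hB : forall (X Y : 'M[C]_p) a b, (X - Y) a b = X a b - Y a b.
      by move=> X Y a b; rewrite !mxE.
    rewrite hB adj_entry; move: hI; set z := (V *m M *m V^t*) j j => hI.
    by apply: cplx_ext; rewrite ?ReB ?ImB ?ReC ?ImC ?hI ?subrr mxE //= oppr0 subrr.
  have : K = 0 by rewrite KE k0 linear0 mulmx0 mul0mx.
  by move/eqP; rewrite subr_eq0 => /eqP.
split; first by rewrite adjmxE.
move=> x.
have Mn : M \is normalmx by apply/normalmxP; rewrite Mh.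
pose V := spectralmx M; pose mu := spectral_diag M.
have Vu : V \is unitarymx := spectral_unitarymx M.
have ME : M = invmx V *m diag_mx mu *m V by apply/orthomx_spectralP.
have Dm : V *m M *m V^t* = diag_mx mu by apply: diagE.
have mu0 : forall j, 0 <= mu 0 j.
  move=> j; have [hI hR] := @G _ _ _ hmax _ Vu j.
  have <- : (V *m M *m V^t*) j j = mu 0 j by rewrite Dm mxE eqxx mulr1n.
  exact: cplx_ge0.
rewrite adjmxE ME invmx_unitary //.
set y := V *m x.
have -> : x^t* *m (V^t* *m diag_mx mu *m V) *m x = y^t* *m diag_mx mu *m y.
  by rewrite /y adj_mul !mulmxA.
rewrite mxE; apply: sumr_ge0 => k _.
rewrite mul_mx_diag mxE adj_entry mulrAC; apply: mulr_ge0; last exact: mu0.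
by apply: cplx_ge0; rewrite ?Im_Cmul ?Re_Cmul ?sq_ge0.
Qed.
End MAX2.
Section FIN.
Local Open Scope sesquilinear_scope.
Variable R : realType.
Local Notation C := (R[i]).
Local Notation Re := (@complex.Re R).
Local Notation Im := (@complex.Im R).

Lemma sv_left p (A U : 'M[C]_p) s : U \is unitarymx ->
  singular_values A s -> singular_values (U *m A) s.
Proof.
move=> Uu [h1 h2 h3]; split => //.
by rewrite adjmxE adj_mul -mulmxA (mulmxA (U^t*) U) (unitary_mulV Uu) mul1mx.
Qed.

Lemma sv_right p (A U : 'M[C]_p) s : U \is unitarymx ->
  singular_values A s -> singular_values (A *m U) s.
Proof.
move=> Uu [h1 h2 h3]; split => //.
rewrite adjmxE adj_mul -mulmxA (mulmxA (A^t*) A) mulmxA -invmx_unitary //.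
by rewrite char_poly_sim ?unitarymx_unit.
Qed.

Lemma rc_neq0 (x : R) : x != 0 -> ((x%:C)%C : C) != 0.
Proof. by move=> hx; apply/eqP => h; move: (congr1 Re h) => /= /eqP; rewrite (negbTE hx). Qed.

Lemma combine p (c : 'I_p -> R) (hc : forall j, 0 < c j) (A : 'M[C]_p) :
  psd (A *m diag_mx (\row_j ((c j)%:C)%C)) ->
  psd (diag_mx (\row_j ((c j)%:C)%C) *m A) -> psd A.
Proof.
set Cd := diag_mx _ => -[h1 h2] [h3 _].
have key : forall i j, A i j = Num.conj (A j i) /\ (c i = c j \/ A i j = 0).
  move=> i j.
  have e1 := congr1 (fun X : 'M[C]_p => X i j) h1.
  have e2 := congr1 (fun X : 'M[C]_p => X i j) h3.
  move: e1 e2; rewrite /= !adjmxE !adj_entry /Cd mul_mx_diag mul_diag_mx !mxE.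
  rewrite !conjM !conj_rc.
  set a := A i j; set b := Num.conj (A j i) => e1 e2.
  have cin : c i != 0 by rewrite gt_eqF.
  have cjn : c j != 0 by rewrite gt_eqF.
  have [cij|cij] := eqVneq (c i) (c j).
    split; last by left.
    by move: e1; rewrite cij => /(mulIf (@rc_neq0 _ cjn)) ->.
  set X := ((c i)%:C)%C : C; set Y := ((c j)%:C)%C : C.
  have hb : b * (Y * Y - X * X) = 0.
    apply/eqP; rewrite mulrBr subr_eq0; apply/eqP.
    have -> : b * (Y * Y) = (Y * b) * Y by ring.
    have -> : b * (X * X) = (b * X) * X by ring.
    by rewrite e1 e2; ring.
  have hYX : Y * Y - X * X != 0.
    rewrite /X /Y !rcM; apply/eqP => h; move: (congr1 Re h) => /=.
    rewrite /= => /eqP; rewrite subr_eq0 => /eqP h'.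
    have : (c i - c j) * (c i + c j) = 0 by rewrite mulrDr !mulrBl h'; ring.
    move/eqP; rewrite mulf_eq0 subr_eq0 (negbTE cij) /= => /eqP.
    have := hc i; have := hc j; lra.
  move: hb => /eqP; rewrite mulf_eq0 (negbTE hYX) orbF => /eqP b0.
  have a0 : a = 0.
    by move: e1; rewrite b0 mul0r => /esym/eqP; rewrite mulf_eq0 (negbTE (@rc_neq0 _ cjn)) orbF => /eqP.
  by rewrite a0 b0; split; [|right].
split.
  by apply/matrixP => i j; rewrite adjmxE adj_entry (key i j).1.
move=> x.
pose d j := Num.sqrt (c j).
have dp : forall j, 0 < d j by move=> j; rewrite sqrtr_gt0.
have d2 : forall j, d j ^+ 2 = c j by move=> j; rewrite sqr_sqrtr // ltW.
pose D1 := diag_mx (\row_j (((d j)^-1)%:C)%C : 'rV[C]_p).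
have Dadj : D1^t* = D1.
  rewrite /D1 tr_diag_mx map_diag_mx; congr diag_mx; apply/rowP => j.
  by rewrite !mxE; exact: conj_rc.
have hDA : D1 *m A *m Cd *m D1 = A.
  apply/matrixP => i j; rewrite /D1 /Cd !mul_mx_diag !mul_diag_mx !mxE.
  have [cij|a0] := (key i j).2; last by rewrite a0 mulr0 !mul0r.
  rewrite (mulrC _ (A i j)) -!mulrA !rcM.
  have -> : (d i)^-1 * (c j * (d j)^-1) = 1.
    move: (d2 j) (dp j); rewrite /d cij; set t := Num.sqrt (c j) => e tp.
    by rewrite -e; field; rewrite gt_eqF.
  by rewrite mulr1.
rewrite -hDA; have := h2 (D1 *m x); rewrite !adjmxE adj_mul Dadj !mulmxA.
by [].
Qed.
End FIN.

Theorem lemma3p3 (R : realType) (p : nat) (c : 'I_p -> R)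
    (hc_dec : forall j k : 'I_p, (j <= k)%N -> c k <= c j)
    (hc_pos : forall j : 'I_p, 0 < c j)
    (A : 'M[R[i]]_p) (s : 'I_p -> R)
    (hs : singular_values A s) :
    (real_complex R (cnorm c s) = \tr (diag_mx (\row_j real_complex R (c j)) *m A)) -> psd A.
Proof.
move=> heq.
have hc0 : forall j, 0 <= c j by move=> j; apply: ltW.
have hRe : complex.Re (\tr (diag_mx (\row_j real_complex R (c j)) *m A)) = cnorm c s.
  by rewrite -heq.
apply: combine; first exact: hc_pos.
- apply: MAX => U Uu.
  rewrite mulmxA mxtrace_mulC [X in _ <= complex.Re X]mxtrace_mulC hRe.
  apply: L1 => //; exact: sv_left.
- apply: MAX => U Uu.
  rewrite mxtrace_mulC -mulmxA hRe.
  apply: L1 => //; exact: sv_right.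
Qed.
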